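(* Let $E$ be a Euclidean space. For closed subsets $V_1,\dots,V_s$ and $W$ of $E$, \[\tau(W\cap V_1\cap\dots\cap V_s)\geqslant\min_{I\subseteq\{1,\dots,s\}}\tau\Big(W\cap\bigcap_{i\in I}\partial V_i\Big).\]
   Context: For nonempty $A\subseteq E$, $d_A(x)=\inf_{a\in A}\|x-a\|$, and $d_\varnothing=+\infty$. For nonempty closed $A$, the medial axis is the closure of $\Delta_A=\{x\in E:\exists a\neq b\in A,\ \|x-a\|=\|x-b\|=d_A(x)\}$, $\tau(A,p)=d_{\Delta_A}(p)$ for $p\in A$, and the reach is $\tau(A)=\inf_{p\in A}\tau(A,p)$; $\tau(\varnothing)=+\infty$. $\partial V_i$ is the topological boundary of $V_i$; the term for $I=\varnothing$ is $\tau(W)$. *)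

(* Defs.v *)
From HB Require Import structures.
From mathcomp Require Import all_boot all_order all_algebra.
From mathcomp Require Import all_classical all_reals.
From mathcomp Require Import ereal topology normedtype.
Set Implicit Arguments. Unset Strict Implicit. Unset Printing Implicit Defensive.
Import Order.TTheory GRing.Theory Num.Theory.
Import numFieldNormedType.Exports.
Local Open Scope ring_scope.
Local Open Scope classical_set_scope.

Section Reach.
Variables (R : realType) (n : nat).
Local Notation E := 'rV[R]_n.

Definition enorm (x : E) : R := Num.sqrt (\sum_(i < n) x ord0 i ^+ 2).

(* d_A(x) = inf_{a in A} ||x - a||; the infimum of the empty set is +oo *)
Definition edist (A : set E) (x : E) : \bar R :=
  ereal_inf [set (enorm (x - a))%:E | a in A].

Definition Delta (A : set E) : set E :=
  [set x | exists a b, [/\ A a, A b, a != b,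
     (enorm (x - a))%:E = edist A x & (enorm (x - b))%:E = edist A x]].

Definition medial_axis (A : set E) : set E := closure (Delta A).

Definition local_reach (A : set E) (p : E) : \bar R := edist (medial_axis A) p.

(* tau(A) = inf_{p in A} tau(A,p); tau(empty) = +oo *)
Definition reach (A : set E) : \bar R := ereal_inf [set local_reach A p | p in A].

Definition boundary (A : set E) : set E := closure A `\` interior A.

End Reach.

(* Main.v *)
Require Import Defs.
From HB Require Import structures.
From mathcomp Require Import all_boot all_order all_algebra.
From mathcomp Require Import all_classical all_reals.
From mathcomp Require Import ereal topology normedtype.
Import Order.TTheory GRing.Theory Num.Theory.
Import numFieldNormedType.Exports.
Local Open Scope ring_scope.
Local Open Scope classical_set_scope.
From mathcomp Require Import ring lra.
Set Implicit Arguments. Unset Strict Implicit. Unset Printing Implicit Defensive.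

Section Norm.
Variables (R : realType) (n : nat).
Local Notation E := 'rV[R]_n.
Local Notation N := (@enorm R n).

Definition sq (x : E) : R := \sum_(i < n) x ord0 i ^+ 2.
Lemma sq_ge0 x : 0 <= sq x.
Proof. by apply: sumr_ge0 => i _; rewrite sqr_ge0. Qed.
Lemma NE (x : E) : N x = Num.sqrt (sq x). Proof. by []. Qed.
Lemma N_ge0 x : 0 <= N x. Proof. exact: sqrtr_ge0. Qed.
Lemma sqE (x : E) : sq x = N x ^+ 2.
Proof. by rewrite NE sqr_sqrtr // sq_ge0. Qed.

Lemma N_eq0 x : N x = 0 -> x = 0.
Proof.
rewrite NE => /eqP; rewrite sqrtr_eq0 => h.
have h0 : sq x = 0 by apply/eqP; rewrite eq_le h sq_ge0.
apply/rowP => i; rewrite mxE.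
have := psumr_eq0P (fun i _ => sqr_ge0 (x ord0 i)) h0 (i:=i) isT.
by move/eqP; rewrite sqrf_eq0 => /eqP.
Qed.

Lemma N0 : N 0 = 0.
Proof. rewrite NE /sq (eq_bigr (fun _ => 0)) ?big1 ?sqrtr0 // => i _; by rewrite mxE expr0n. Qed.

Lemma sqZ (t : R) (x : E) : sq (t *: x) = t ^+ 2 * sq x.
Proof. rewrite /sq mulr_sumr; apply: eq_bigr => i _; by rewrite mxE exprMn. Qed.

Lemma NZ (t : R) (x : E) : N (t *: x) = `|t| * N x.
Proof. by rewrite !NE sqZ sqrtrM ?sqr_ge0 // sqrtr_sqr. Qed.

Lemma NN (x : E) : N (- x) = N x.
Proof. by rewrite -scaleN1r NZ normrN normr1 mul1r. Qed.

Lemma NB (x y : E) : N (x - y) = N (y - x).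
Proof. by rewrite -NN opprB. Qed.

Definition dot (x y : E) : R := \sum_(i < n) x ord0 i * y ord0 i.

Lemma sqD (x y : E) : sq (x + y) = sq x + 2 * dot x y + sq y.
Proof.
rewrite /sq /dot mulr_sumr -!big_split /=; apply: eq_bigr => i _.
rewrite mxE; ring.
Qed.

Lemma CS (x y : E) : dot x y ^+ 2 <= sq x * sq y.
Proof.
have [A0|Apos] := eqVneq (sq x) 0.
  have x0 : x = 0 by apply: N_eq0; rewrite NE A0 sqrtr0.
  have -> : dot x y = 0 by rewrite x0 /dot big1 // => i _; rewrite mxE mul0r.
  by rewrite expr0n /= mulr_ge0 ?sq_ge0.
have A0 : 0 < sq x by rewrite lt_def Apos sq_ge0.
set A := sq x; set B := dot x y; set C := sq y.
have h := sq_ge0 ((- B / A) *: x + y).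
have eB : dot ((- B / A) *: x) y = (- B / A) * B.
  rewrite /B /dot mulr_sumr; apply: eq_bigr => i _; by rewrite mxE mulrA.
rewrite sqD sqZ eB -/A -/C in h.
have e : (- B / A) ^+ 2 * A + 2 * (- B / A * B) + C = C - B ^+ 2 / A.
  by field; rewrite gt_eqF.
rewrite e subr_ge0 ler_pdivrMr // in h.
by rewrite mulrC.
Qed.

Lemma N_triangle (x y : E) : N (x + y) <= N x + N y.
Proof.
rewrite NE -(ger0_norm (addr_ge0 (N_ge0 x) (N_ge0 y))) -sqrtr_sqr.
apply: ler_wsqrtr.
rewrite sqD sqrrD -!sqE.
rewrite lerD2r lerD2l -(mulr_natl (N x * N y)) ler_pM2l //.
apply: le_trans (ler_norm _) _.
rewrite -(sqrtr_sqr (dot x y)) !NE -sqrtrM ?sq_ge0 //.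
exact: ler_wsqrtr (CS x y).
Qed.

Lemma N_triangleB (x y z : E) : N (x - z) <= N (x - y) + N (y - z).
Proof. have -> : x - z = (x - y) + (y - z) by rewrite addrA subrK. exact: N_triangle. Qed.

Lemma coord_le_N (x : E) (i : 'I_n) : `|x ord0 i| <= N x.
Proof.
rewrite NE -sqrtr_sqr; apply: ler_wsqrtr.
rewrite /sq (bigD1 i) //= lerDl; apply: sumr_ge0 => j _; exact: sqr_ge0.
Qed.

Lemma mxnorm_le_N (x : E) : `|x| <= N x.
Proof.
rewrite (_ : `|x| = mx_norm x) // mx_normrE.
apply: bigmax_le => [|[a b] _]; first exact: N_ge0.
by rewrite /= (ord1 a) coord_le_N.
Qed.

Definition cN : R := Num.sqrt n%:R + 1.
Lemma cN_gt0 : 0 < cN.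
Proof. by rewrite /cN ltr_wpDl ?sqrtr_ge0. Qed.

Lemma N_le_mxnorm (x : E) : N x <= cN * `|x|.
Proof.
have h : sq x <= n%:R * `|x| ^+ 2.
  apply: (@le_trans _ _ (\sum_(i < n) `|x| ^+ 2)); last first.
    by rewrite sumr_const card_ord mulr_natl.
  rewrite /sq; apply: ler_sum => i _.
  rewrite -real_normK ?num_real // lerXn2r ?nnegrE ?normr_ge0 //.
  rewrite (_ : `|x| = mx_norm x) // mx_normrE.
  exact: (le_bigmax _ (fun ij : 'I_1 * 'I_n => `|x ij.1 ij.2|) (ord0, i)).
rewrite NE; apply: le_trans (ler_wsqrtr h) _.
by rewrite sqrtrM ?ler0n // sqrtr_sqr normr_id /cN mulrDl mul1r lerDl normr_ge0.
Qed.

End Norm.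

Section Topo.
Variables (R : realType) (n : nat).
Local Notation E := 'rV[R]_n.
Local Notation N := (@enorm R n).

Lemma ballN (y x : E) e : ball y e x -> N (y - x) < cN R n * e.
Proof.
rewrite -ball_normE /= => h.
apply: le_lt_trans (N_le_mxnorm _) _.
by rewrite ltr_pM2l // cN_gt0.
Qed.

Lemma closure_approx (A : set E) y : closure A y ->
  forall e, 0 < e -> exists x, A x /\ N (y - x) < e.
Proof.
move=> cl e e0.
have c0 := cN_gt0 R n.
have [x [Ax bx]] := cl _ (nbhsx_ballx y (e / cN R n) (divr_gt0 e0 c0)).
exists x; split => //.
by have := ballN bx; rewrite mulrC divfK ?gt_eqF.
Qed.

Lemma interior_ball (V : set E) a : interior V a ->
  exists2 d, 0 < d & forall q, N (q - a) < d -> V q.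
Proof.
move=> /nbhs_ballP [e e0 sub]; exists e => // q hq; apply: sub.
rewrite -ball_normE /=; apply: le_lt_trans (mxnorm_le_N _) _; by rewrite NB.
Qed.

Lemma closed_ge (f : E -> R) (al : R) :
  (forall x y, f x <= f y + N (x - y)) -> closed [set x | al <= f x].
Proof.
move=> Lf y cly; rewrite /=; apply/ler_addgt0Pr => e e0.
have [x [Ax hx]] := closure_approx cly e0.
have := Lf x y; rewrite NB => h.
apply: (le_trans Ax); apply: (le_trans h); rewrite lerD2l; exact: ltW.
Qed.

Lemma closed_le (f : E -> R) (al : R) :
  (forall x y, f x <= f y + N (x - y)) -> closed [set x | f x <= al].
Proof.
move=> Lf y cly; rewrite /=; apply/ler_addgt0Pr => e e0.
have [x [Ax hx]] := closure_approx cly e0.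
have := Lf y x => h.
apply: (le_trans h); apply: lerD => //; exact: ltW.
Qed.

Lemma N_lip (z : E) x y : N (z - x) <= N (z - y) + N (x - y).
Proof. by apply: le_trans (N_triangleB z y x) _; rewrite [N (y - x)]NB. Qed.

Lemma N_lip' (z : E) x y : N (x - z) <= N (y - z) + N (x - y).
Proof. by apply: le_trans (N_triangleB x y z) _; rewrite addrC. Qed.

Lemma bounded_N (K : set E) (z : E) (c : R) :
  (forall q, K q -> N (z - q) <= c) -> bounded_set K.
Proof.
move=> hK; rewrite /bounded_set /=.
apply: filterS (nbhs_pinfty_ge (num_real (N z + c))) => M hM q Kq /=.
apply: le_trans hM; apply: le_trans (mxnorm_le_N _) _.
have := N_triangleB q z 0; rewrite !subr0 NB => h.
by apply: (le_trans h); rewrite addrC lerD2l hK.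
Qed.

End Topo.

Section Dist.
Variables (R : realType) (n : nat).
Local Notation E := 'rV[R]_n.
Local Notation N := (@enorm R n).

Lemma edist_le (A : set E) x a : A a -> (Defs.edist A x <= (N (x - a))%:E)%E.
Proof. by move=> Aa; apply: ereal_inf_lbound; exists a. Qed.

Lemma edist_ge (A : set E) x c :
  (forall a, A a -> c <= N (x - a)) -> (c%:E <= Defs.edist A x)%E.
Proof. by move=> h; apply: le_ereal_inf_tmp => _ [a Aa <-]; rewrite lee_fin h. Qed.

Lemma edist_lt (A : set E) x c :
  (Defs.edist A x < c%:E)%E -> exists a, A a /\ N (x - a) < c.
Proof. by move=> /ereal_inf_lt [_ [a Aa <-]]; rewrite lte_fin => h; exists a. Qed.

Lemma reach_le_Delta (A : set E) x a b : A a -> A b -> a != b ->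
  (N (x - a))%:E = Defs.edist A x -> (N (x - b))%:E = Defs.edist A x ->
  (reach A <= (N (x - a))%:E)%E.
Proof.
move=> Aa Ab ab ea eb.
have D : Delta A x by exists a, b; split.
apply: (@le_trans _ _ (local_reach A a)); first by apply: ereal_inf_lbound; exists a.
rewrite NB; apply: edist_le; exact: subset_closure.
Qed.

End Dist.

Section Core.
Variables (R : realType) (n : nat).
Local Notation E := 'rV[R]_n.
Local Notation N := (@enorm R n).

Lemma edist_ge0 (A : set E) x : (0%:E <= Defs.edist A x)%E.
Proof. by apply: edist_ge => a _; exact: N_ge0. Qed.

Lemma core (W V : set E) (z a b : E) :
  closed W -> W a -> V a -> W b -> V b -> a != b ->
  (N (z - a))%:E = Defs.edist (W `&` V) z ->
  (N (z - b))%:E = Defs.edist (W `&` V) z ->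
  interior V a -> (reach W <= (N (z - a))%:E)%E.
Proof.
move=> clW Wa Va Wb Vb ab ea eb intV.
set r := N (z - a).
rewrite leNgt; apply/negP => hr.
have hC c : W c -> V c -> r <= N (z - c).
  by move=> Wc Vc; rewrite -lee_fin /r ea; apply: edist_le.
have r0 : 0 < r.
  rewrite lt_def N_ge0 andbT; apply/eqP => r0.
  have za : z - a = 0 by apply: N_eq0.
  have : N (z - b) = 0 by apply/EFin_inj; rewrite eb -ea -/r r0.
  move/N_eq0 => zb; move/eqP: ab; apply.
  by apply/eqP; rewrite -subr_eq0 -(subrKA z) -opprB za zb oppr0 addr0.
pose zt t := a + t *: (z - a).
have zt_a t : 0 <= t -> N (zt t - a) = t * r.
  by move=> t0; rewrite /zt addrAC subrr add0r NZ ger0_norm.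
have zt_zt s t : N (zt s - zt t) = `|s - t| * r.
  rewrite /zt opprD addrACA subrr add0r -scalerBl NZ //.
have z_zt t : t <= 1 -> N (z - zt t) = (1 - t) * r.
  move=> t1; have -> : z - zt t = zt 1 - zt t by rewrite /zt scale1r addrCA subrr addr0.
  by rewrite zt_zt ger0_norm // subr_ge0.
have F1 t c : 0 <= t <= 1 -> W c -> V c -> t * r <= N (zt t - c).
  move=> /andP [t0 t1] Wc Vc.
  have h1 := hC c Wc Vc.
  have h2 := N_triangleB z (zt t) c.
  rewrite z_zt // in h2.
  have : r <= (1 - t) * r + N (zt t - c) by apply: le_trans h2.
  rewrite mulrBl mul1r; set u := t * r; set v := N _; lra.
have F2 t : 0 <= t -> (Defs.edist W (zt t) <= (t * r)%:E)%E.
  by move=> t0; rewrite -zt_a //; apply: edist_le.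
pose S := [set t | 0 <= t <= 1 /\ Defs.edist W (zt t) = (t * r)%:E].
have S0 : S 0.
  split; first by rewrite lexx ler01.
  apply/eqP; rewrite eq_le F2 // mul0r edist_ge0 //.
have hsS : has_sup S.
  split; first by exists 0.
  by exists 1 => t [/andP [_ ?] _].
set ts := sup S.
have ts0 : 0 <= ts by apply: sup_upper_bound.
have ts1 : ts <= 1 by apply: ge_sup; [exists 0 | move=> t [/andP [_ ?] _]].
have hts : Defs.edist W (zt ts) = (ts * r)%:E.
  apply/eqP; rewrite eq_le F2 //=.
  apply: edist_ge => q Wq.
  apply/ler_addgt0Pr => e e0.
  have e2r : 0 < e / (2 * r) by rewrite divr_gt0 // mulr_gt0.
  have [s [/andP [s0 s1] es] lts] := sup_adherent e2r hsS.
  have sts : s <= ts by apply: sup_upper_bound => //; split => //; exact/andP.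
  have h1 : s * r <= N (zt s - q) by rewrite -lee_fin -es; apply: edist_le.
  have h2 := N_triangleB (zt s) (zt ts) q.
  rewrite zt_zt distrC ger0_norm ?subr_ge0 // in h2.
  have h3 : (ts - s) * r < e / 2.
    rewrite -ltr_pdivlMr // -mulrA -invfM.
    by rewrite ltrBlDr addrC -ltrBlDr.
  have e4 : ts * r = s * r + (ts - s) * r by ring.
  set u := (ts - s) * r in h2 h3 e4.
  set v := N (zt ts - q) in h2 *.
  set w := N (zt s - q) in h1 h2.
  rewrite e4; lra.
have uniq q : W q -> N (zt ts - q) = ts * r -> q = a.
  move=> Wq eq; case: (eqVneq q a) => // qa; exfalso.
  have aq : a != q by rewrite eq_sym.
  have h := reach_le_Delta (x:=zt ts) Wa Wq aq.
  rewrite zt_a // hts eq in h; have := h erefl erefl.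
  apply/negP; rewrite -ltNge; apply: le_lt_trans hr.
  by rewrite lee_fin ger_pMl // ts1.
have ts1' : ts < 1.
  rewrite lt_def ts1 andbT; apply/eqP => ets.
  have zt1 : zt ts = z by rewrite -ets /zt scale1r addrCA subrr addr0.
  have : b = a by apply: uniq => //; rewrite zt1 -ets mul1r; apply/EFin_inj; rewrite eb ea.
  by move/eqP; rewrite eq_sym (negbTE ab).
have [d d0 hd] := interior_ball intV.
have approx e : 0 < e -> exists q, [/\ W q, d <= N (q - a) & N (zt ts - q) < ts * r + e].
  move=> e0.
  pose eta := Num.min (1 - ts) (e / (4 * r)).
  have eta0 : 0 < eta by rewrite lt_min subr_gt0 ts1' divr_gt0 // mulr_gt0.
  have etar : eta * r <= e / 4.
    rewrite -ler_pdivlMr // -mulrA -invfM ge_min; apply/orP; right; exact: lexx.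
  set t := ts + eta.
  have t1 : t <= 1 by rewrite /t -lerBrDl ge_min lexx.
  have t0 : 0 <= t by rewrite /t addr_ge0 // ltW.
  have tS : ~ S t.
    move=> St; have := sup_upper_bound hsS St; rewrite -/ts /t.
    by apply/negP; rewrite -ltNge ltrDl.
  have [q [Wq hq]] : exists q, W q /\ N (zt t - q) < t * r.
    apply: edist_lt; rewrite lt_neqAle F2 // andbT.
    by apply/negP => /eqP h; apply: tS; split => //; rewrite t0 t1.
  have nVq : ~ V q.
    move=> Vq; have := F1 t q _ Wq Vq; rewrite t0 t1 => /(_ isT).
    by apply/negP; rewrite -ltNge.
  exists q; split => //.
    by rewrite leNgt; apply/negP => /hd.
  have h2 := N_triangleB (zt ts) (zt t) q.
  have ee : `|ts - t| = eta by rewrite /t opprD addrA subrr sub0r normrN gtr0_norm.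
  rewrite zt_zt ee in h2.
  have e5 : t * r = ts * r + eta * r by rewrite /t mulrDl.
  move: hq; rewrite e5 => hq.
  set u := eta * r in etar h2 hq; set v := N (zt t - q) in h2 hq.
  set w := N (zt ts - q) in h2 *; lra.
have /choice [qf hqf] : forall k : nat, exists q,
    [/\ W q, d <= N (q - a) & N (zt ts - q) < ts * r + k.+1%:R^-1].
  by move=> k; apply: approx; rewrite invr_gt0 ltr0n.
pose K := W `&` [set q | d <= N (q - a)] `&` [set q | N (zt ts - q) <= ts * r + 1].
have clK : closed K.
  apply: closedI; first apply: closedI => //.
    by apply: (@closed_ge R n (fun x => N (x - a)) d) => x y; exact: N_lip'.
  by apply: (@closed_le R n (fun x => N (zt ts - x)) (ts * r + 1)) => x y; exact: N_lip.
have cK : compact K.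
  apply: bounded_closed_compact => //.
  by apply: (bounded_N (z:=zt ts) (c:= ts * r + 1)) => q [_ ?].
have FK : (qf @ \oo) K.
  exists 0%N => // k _ /=; have [Wq dq hq] := hqf k; split; [split|] => //=.
  apply: ltW; apply: (lt_le_trans hq); rewrite lerD2l invf_le1 ?ltr0n //.
  by rewrite ler1n.
have [p [Kp clp]] := cK (qf @ \oo) _ FK.
have hp : N (zt ts - p) <= ts * r.
  rewrite leNgt; apply/negP => hgt.
  set g := N (zt ts - p) - ts * r.
  have g0 : 0 < g by rewrite subr_gt0.
  have g2 : 0 < g / 2 by rewrite divr_gt0.
  have FA : (qf @ \oo) [set y | N (zt ts - y) < ts * r + g / 2].
    have [k0 _ hk0] : \oo [set k : nat | 2 / g < k%:R] := nbhs_infty_gtr (2 / g).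
    exists k0 => // k kk /=; have hk := hk0 k kk.
    have [_ _ hq] := hqf k.
    apply: (lt_trans hq); rewrite ltrD2l invf_plt ?posrE ?ltr0n //.
    rewrite invf_div; apply: (lt_le_trans hk); rewrite ler_nat; exact: leqnSn.
  have NBp : nbhs p (ball p (g / 2 / cN R n)).
    apply: nbhsx_ballx; apply: divr_gt0 => //; exact: cN_gt0.
  have [y [/= hy py]] := clp _ _ FA NBp.
  have := ballN py; rewrite mulrC divfK ?gt_eqF ?cN_gt0 // => hpy.
  have h := N_triangleB (zt ts) y p.
  rewrite [N (y - p)]NB in h.
  have eg : N (zt ts - p) = ts * r + g by rewrite /g; ring.
  move: h; rewrite eg.
  set u := ts * r in hy *; set v := N (zt ts - y) in hy *; set w := N (p - y) in hpy *.
  lra.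
have pa : p = a.
  apply: uniq; first by case: Kp => -[].
  apply/eqP; rewrite eq_le hp /= -lee_fin -hts; apply: edist_le.
  by case: Kp => -[].
case: Kp => -[_ hd'] _; move: hd'; rewrite /= pa subrr N0 => hd'.
by have := lt_le_trans d0 hd'; rewrite ltxx.
Qed.

End Core.

Section Fin.
Variables (R : realType) (n : nat).
Local Notation E := 'rV[R]_n.
Local Notation N := (@enorm R n).

Lemma step (W V : set E) z : closed W -> closed V -> Delta (W `&` V) z ->
  (Order.min (reach W) (reach (W `&` boundary V)) <= Defs.edist (W `&` V) z)%E.
Proof.
move=> clW clV [a [b [[Wa Va] [Wb Vb] ab ea eb]]].
rewrite -ea.
have intOr c : V c -> ~ boundary V c -> interior V c.
  move=> Vc nb; apply: contrapT => ni; apply: nb; split => //; exact: subset_closure.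
case: (pselect (boundary V a)) => Ba; last first.
  by rewrite ge_min (core clW Wa Va Wb Vb ab ea eb (intOr a Va Ba)).
case: (pselect (boundary V b)) => Bb; last first.
  have eab : N (z - a) = N (z - b) by apply/EFin_inj; rewrite ea eb.
  have ba : b != a by rewrite eq_sym.
  by rewrite ge_min eab (core clW Wb Vb Wa Va ba eb ea (intOr b Vb Bb)).
rewrite ge_min; apply/orP; right.
set B := W `&` boundary V.
have eB : (N (z - a))%:E = Defs.edist B z.
  apply/eqP; rewrite eq_le; apply/andP; split; last by apply: edist_le; split.
  apply: edist_ge => c [Wc [clc _]].
  rewrite -lee_fin ea; apply: edist_le; split => //; exact: clV.
have eB' : (N (z - b))%:E = Defs.edist B z by rewrite eb -ea eB.
by apply: (reach_le_Delta (x:=z) (A:=B) _ _ ab eB eB'); split.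
Qed.

Lemma reach_inter (W V : set E) : closed W -> closed V ->
  (Order.min (reach W) (reach (W `&` boundary V)) <= reach (W `&` V))%E.
Proof.
move=> clW clV; set m := Order.min _ _.
apply: le_ereal_inf_tmp => _ [p Cp <-].
rewrite /local_reach /Defs.edist /medial_axis.
apply: le_ereal_inf_tmp => _ [y cly <-].
apply/lee_addgt0Pr => e e0.
have [z [Dz hz]] := closure_approx cly e0.
have h1 := step clW clV Dz.
have h2 : (Defs.edist (W `&` V) z <= (N (z - p))%:E)%E by apply: edist_le.
apply: (le_trans h1); apply: (le_trans h2); rewrite -EFinD lee_fin.
have := N_triangleB p y z; rewrite [N (z - p)]NB.
set u := N (p - z); set v := N (p - y); set w := N (y - z) in hz *; lra.
Qed.

Lemma closed_boundary (V : set E) : closed (boundary V).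
Proof.
apply: closedI; first exact: closed_closure.
rewrite closedC; exact: open_interior.
Qed.

End Fin.

Lemma main_ind (R : realType) (n s : nat) (V : 'I_s -> set 'rV[R]_n) (W : set 'rV[R]_n) :
  (forall i, closed (V i)) -> closed W ->
  forall (l : seq 'I_s) (K : {set 'I_s}),
  exists I : {set 'I_s},
    (reach (W `&` \bigcap_(i in [set i | i \in I]) boundary (V i))
     <= reach (W `&` \bigcap_(i in [set i | i \in K]) boundary (V i)
                 `&` \bigcap_(i in [set i | i \in l]) V i))%E.
Proof.
move=> clV clW l; elim: l => [|j l IH] K.
  exists K.
  have -> : \bigcap_(i in [set i | i \in [::]]) V i = setT.
    by apply/seteqP; split => x //= _ i; rewrite in_nil.
  by rewrite setIT.
set W' := W `&` \bigcap_(i in [set i | i \in K]) boundary (V i)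
                 `&` \bigcap_(i in [set i | i \in l]) V i.
have clW' : closed W'.
  apply: closedI; first apply: closedI => //.
    by apply: closed_bigI => i _; exact: closed_boundary.
  by apply: closed_bigI => i _; exact: clV.
have e1 : W `&` \bigcap_(i in [set i | i \in K]) boundary (V i)
                 `&` \bigcap_(i in [set i | i \in j :: l]) V i = W' `&` V j.
  rewrite /W'; apply/seteqP; split => x /=.
    move=> [[Wx Bx] Vx]; split; last by apply: Vx; rewrite /= in_cons eqxx.
    split; first by split.
    by move=> i il; apply: Vx; rewrite /= in_cons il orbT.
  move=> [[[Wx Bx] Vx] Vjx]; split; first by split.
  by move=> i /=; rewrite in_cons => /orP [/eqP -> | il] //; exact: Vx.
have e2 : W' `&` boundary (V j) =
  W `&` \bigcap_(i in [set i | i \in j |: K]) boundary (V i)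
    `&` \bigcap_(i in [set i | i \in l]) V i.
  rewrite /W'; apply/seteqP; split => x /=.
    move=> [[[Wx Bx] Vx] Bjx]; split => //; split => // i /=.
    by rewrite in_setU1 => /orP [/eqP -> | iK] //; exact: Bx.
  move=> [[Wx Bx] Vx]; split; [split => //; split => // i iK|].
    by apply: Bx; rewrite /= in_setU1 iK orbT.
  by apply: Bx; rewrite /= in_setU1 eqxx.
rewrite e1.
have h := reach_inter clW' (clV j).
move: h; rewrite ge_min => /orP [h | h].
  have [I hI] := IH K; exists I; exact: le_trans hI h.
have [I hI] := IH (j |: K); exists I; rewrite e2 in h; exact: le_trans hI h.
Qed.

Unset Implicit Arguments.
Theorem corollary2p6 (R : realType) (n s : nat)
    (V : 'I_s -> set 'rV[R]_n) (W : set 'rV[R]_n) :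
  (forall i, closed (V i)) -> closed W ->
  (\big[Order.min/+oo%E]_(I : {set 'I_s})
      reach (W `&` \bigcap_(i in [set i | i \in I]) boundary (V i))
    <= reach (W `&` \bigcap_(i in [set: 'I_s]) V i))%E.
Proof.
move=> clV clW.
have [I hI] := main_ind clV clW (enum 'I_s) (@finset.set0 'I_s).
have e : W `&` \bigcap_(i in [set i | i \in @finset.set0 'I_s]) boundary (V i)
     `&` \bigcap_(i in [set i | i \in enum 'I_s]) V i = W `&` \bigcap_(i in [set: 'I_s]) V i.
  apply/seteqP; split => x /=.
    by move=> [[Wx _] Vx]; split => // i _; apply: Vx; rewrite /= mem_enum.
  move=> [Wx Vx]; split; first by split => // i /=; rewrite finset.in_set0.
  by move=> i _; exact: Vx.
rewrite e in hI; apply: le_trans hI; exact: bigmin_le.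
Qed.
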